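(* Let $M,M'\in\mathrm{Mat}(2,\mathbb{Z})$ have the same trace and determinant, and assume $\mathrm{mgcd}(M)=\mathrm{mgcd}(M')$. Then for every integer $n\ge2$, the reductions mod $n$ of $M$ and $M'$ are $\mathrm{Mat}(2,\mathbb{Z}_n)^\times$-conjugate.
   Context: For $M=\begin{pmatrix}a&b\\c&d\end{pmatrix}$, $\mathrm{mgcd}(M)=\gcd(b,c,d-a)\ge0$, equal to $0$ iff $b=c=d-a=0$. $\mathrm{Mat}(2,\mathbb{Z}_n)^\times$ is the group of invertible $2\times2$ matrices over $\mathbb{Z}_n=\mathbb{Z}/n\mathbb{Z}$. *)

(* Defs.v *)
From mathcomp Require Import all_boot all_order all_algebra.
Set Implicit Arguments. Unset Strict Implicit. Unset Printing Implicit Defensive.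
Import GRing.Theory Num.Theory.
Local Open Scope ring_scope.

(* mgcd(M) = gcd(b, c, d - a) for M = [[a, b], [c, d]] (nonnegative; 0 iff scalar). *)
Definition mgcd (M : 'M[int]_2) : int :=
  gcdz (gcdz (M 0 1) (M 1 0)) (M 1 1 - M 0 0).

(* Reduction mod n of an integer matrix, as a matrix over 'Z_n (use only for 1 < n). *)
Definition red_mod (n : nat) (M : 'M[int]_2) : 'M['Z_n]_2 :=
  map_mx (fun z : int => z%:~R) M.

Definition mx_conj (R : comUnitRingType) (A B : 'M[R]_2) : Prop :=
  exists2 P : 'M[R]_2, P \in unitmx & B = P *m A *m invmx P.

(* Main.v *)
Require Import Defs.
From mathcomp Require Import all_boot all_order all_algebra.
From mathcomp Require Import ring.
Import GRing.Theory Num.Theory.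
Set Implicit Arguments. Unset Strict Implicit.
Local Open Scope ring_scope.

Lemma dvd_part p n (pi : nat_pred) : prime p -> (0 < n)%N -> (p %| n)%N ->
  (p %| n`_pi)%N = (p \in pi).
Proof.
move=> pp n0 pn; have := pi_of_part pi n0 p.
by rewrite !inE /= !mem_primes pp n0 pn part_gt0.
Qed.

Lemma EuclidZ p (u v : int) : prime p ->
  (p%:Z %| u * v)%Z = (p%:Z %| u)%Z || (p%:Z %| v)%Z.
Proof. by move=> pp; rewrite !dvdzE abszM Euclid_dvdM. Qed.

Lemma form_coprime (A B C : int) (n : nat) : (0 < n)%N ->
  (forall p, prime p -> (p%:Z %| A)%Z -> (p%:Z %| B)%Z -> (p%:Z %| C)%Z -> False) ->
  exists x y : int, coprime n `|A * x * x + B * x * y + C * y * y|.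
Proof.
move=> n0 prim.
pose pi1 : nat_pred := [pred p : nat | ~~ (p%:Z %| A)%Z].
pose pi2 : nat_pred := [pred p : nat | (p%:Z %| A)%Z && ~~ (p%:Z %| C)%Z].
exists (n`_pi2)%:Z, (n`_pi1)%:Z.
set x := (n`_pi2)%:Z; set y := (n`_pi1)%:Z.
set Q := A * x * x + B * x * y + C * y * y.
suff key : forall p, prime p -> (p %| n)%N -> (p%:Z %| Q)%Z -> False.
  rewrite /coprime; apply/negPn/negP => H.
  have g0 : (0 < gcdn n `|Q|)%N by rewrite gcdn_gt0 n0.
  have g1 : (1 < gcdn n `|Q|)%N by move: g0 H; case: (gcdn _ _) => [|[|k]].
  apply: (key (pdiv (gcdn n `|Q|))); first exact: pdiv_prime.
    exact: dvdn_trans (pdiv_dvd _) (dvdn_gcdl _ _).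
  rewrite dvdzE /=; exact: dvdn_trans (pdiv_dvd _) (dvdn_gcdr _ _).
move=> p pp pn pQ.
have hx : (p%:Z %| x)%Z = (p \in pi2) by rewrite dvdzE /= dvd_part.
have hy : (p%:Z %| y)%Z = (p \in pi1) by rewrite dvdzE /= dvd_part.
rewrite !inE /= in hx hy.
case pA : (p%:Z %| A)%Z in hx hy.
  case pC : (p%:Z %| C)%Z in hx.
    have pB : (p%:Z %| B * x * y)%Z.
      have -> : B * x * y = Q - A * x * x - C * y * y by rewrite /Q; ring.
      by rewrite !rpredB // ?dvdz_mulr ?dvdz_mull.
    rewrite !EuclidZ // hx hy !orbF in pB.
    exact: prim p pp pA pB pC.
  have pB : (p%:Z %| C * y * y)%Z.
    have -> : C * y * y = Q - A * x * x - B * x * y by rewrite /Q; ring.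
    have hx' : (p%:Z %| x)%Z by rewrite hx.
    apply: rpredB; first apply: rpredB => //.
      exact: dvdz_mulr (dvdz_mulr _ pA).
    exact: dvdz_mulr (dvdz_mull _ hx').
  by move: pB; rewrite !EuclidZ // hy pC.
have pB : (p%:Z %| A * x * x)%Z.
  have -> : A * x * x = Q - B * x * y - C * y * y by rewrite /Q; ring.
  have hy' : (p%:Z %| y)%Z by rewrite hy.
  apply: rpredB; first apply: rpredB => //.
    exact: dvdz_mull hy'.
  exact: dvdz_mull hy'.
by move: pB; rewrite !EuclidZ // hx pA andFb.
Qed.

Definition mk2 (R : Type) (a b c d : R) : 'M[R]_2 :=
  \matrix_(i, j) if i == 0 then (if j == 0 then a else b) else (if j == 0 then c else d).

Lemma mk2E (R : Type) (a b c d : R) :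
  [/\ mk2 a b c d 0 0 = a, mk2 a b c d 0 1 = b, mk2 a b c d 1 0 = c & mk2 a b c d 1 1 = d].
Proof. by rewrite !mxE. Qed.

Lemma eq2 (R : Type) (A : 'M[R]_2) : A = mk2 (A 0 0) (A 0 1) (A 1 0) (A 1 1).
Proof.
apply/matrixP => i j; rewrite mxE.
case: i => [[|[|//]] Hi]; case: j => [[|[|//]] Hj] /=;
  by congr (A _ _); apply: val_inj.
Qed.

Lemma mul2E (R : pzSemiRingType) (A B : 'M[R]_2) :
  A *m B = mk2 (A 0 0 * B 0 0 + A 0 1 * B 1 0) (A 0 0 * B 0 1 + A 0 1 * B 1 1)
               (A 1 0 * B 0 0 + A 1 1 * B 1 0) (A 1 0 * B 0 1 + A 1 1 * B 1 1).
Proof.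
rewrite [LHS]eq2 !mxE !big_ord_recl !big_ord0 !addr0.
have -> : lift ord0 ord0 = 1 :> 'I_2 by apply: val_inj.
by [].
Qed.

Lemma red2 n (a b c d : int) : red_mod n (mk2 a b c d) = mk2 a%:~R b%:~R c%:~R d%:~R.
Proof. by rewrite [LHS]eq2 !mxE. Qed.

Lemma redM n (A B : 'M[int]_2) : red_mod n (A *m B) = red_mod n A *m red_mod n B.
Proof. rewrite /red_mod. exact: (map_mxM (intr : {rmorphism int -> 'Z_n})). Qed.
Lemma redDet n (A : 'M[int]_2) : \det (red_mod n A) = (\det A)%:~R.
Proof. rewrite /red_mod. exact: (det_map_mx (intr : {rmorphism int -> 'Z_n})). Qed.

Lemma det2 (R : comPzRingType) (A : 'M[R]_2) : \det A = A 0 0 * A 1 1 - A 0 1 * A 1 0.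
Proof.
rewrite (expand_det_row _ 0) !big_ord_recl big_ord0 /cofactor !det_mx11 !mxE /=.
rewrite addr0 expr0 expr1 mul1r mulN1r mulrN.
by congr (_ * _ - _ * _); congr (A _ _); apply/val_inj.
Qed.
Lemma tr2 (R : comPzRingType) (A : 'M[R]_2) : \tr A = A 0 0 + A 1 1.
Proof.
rewrite /mxtrace !big_ord_recl big_ord0 addr0.
by congr (A _ _ + A _ _); apply/val_inj.
Qed.

Lemma unit_int n (z : int) : (1 < n)%N -> coprime n `|z| -> (z%:~R : 'Z_n) \is a GRing.unit.
Proof.
move=> n1; case: z => m /= H.
  by rewrite -[m%:~R]/(m%:R) unitZpE.
by rewrite NegzE mulrNz unitrN -[_%:~R]/(m.+1%:R) unitZpE.
Qed.

Lemma cyc n (a g p q r s x y : int) : (1 < n)%N ->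
  coprime n `|r * x * x + (s - p) * x * y + (- q) * y * y| ->
  mx_conj (red_mod n (mk2 (a + g * p) (g * q) (g * r) (a + g * s)))
          (red_mod n (mk2 a (- (g * (p * s - q * r))) g (a + g * (p + s)))).
Proof.
move=> n1 cop.
set M := mk2 _ _ _ _; set X := mk2 _ _ _ _.
pose P := mk2 x (p * x + q * y) y (r * x + s * y).
have hMP : M *m P = P *m X.
  rewrite !mul2E /M /X /P; have [-> -> -> ->] := mk2E (a + g * p) (g * q) (g * r) (a + g * s).
  have [-> -> -> ->] := mk2E a (- (g * (p * s - q * r))) g (a + g * (p + s)).
  have [-> -> -> ->] := mk2E x (p * x + q * y) y (r * x + s * y).
  congr mk2; ring.
have uP : red_mod n P \in unitmx.
  rewrite unitmxE redDet det2 /P; have [-> -> -> ->] := mk2E x (p * x + q * y) y (r * x + s * y).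
  apply: unit_int => //.
  suff -> : x * (r * x + s * y) - (p * x + q * y) * y = r * x * x + (s - p) * x * y + (- q) * y * y by [].
  ring.
exists (invmx (red_mod n P)); first by rewrite unitmx_inv.
rewrite invmxK -mulmxA -redM hMP redM mulmxA mulVmx // mul1mx.
done.
Qed.
Lemma conj_trans (R : comUnitRingType) (A B X : 'M[R]_2) :
  mx_conj A X -> mx_conj B X -> mx_conj A B.
Proof.
move=> [P uP eA] [Q uQ eB].
have uR : invmx Q *m P \in unitmx by rewrite unitmx_mul unitmx_inv uP uQ.
exists (invmx Q *m P) => //.
have iR : invmx (invmx Q *m P) = invmx P *m Q.
  have hS : (invmx P *m Q) *m (invmx Q *m P) = 1%:M.
    by rewrite mulmxA -[invmx P *m Q *m invmx Q]mulmxA mulmxV // mulmx1 mulVmx.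
  by rewrite -[invmx (_ *m _)]mul1mx -hS -mulmxA mulmxV // mulmx1.
have : invmx Q *m X *m Q = B by rewrite eB !mulmxA mulVmx // mul1mx -mulmxA mulVmx // mulmx1.
by rewrite eA iR !mulmxA => <-.
Qed.

Lemma prim_of (M : 'M[int]_2) (g b1 c1 e : int) : g = mgcd M -> g != 0 ->
  M 0 1 = b1 * g -> M 1 0 = c1 * g -> M 1 1 - M 0 0 = e * g ->
  forall p, prime p -> (p%:Z %| b1)%Z -> (p%:Z %| c1)%Z -> (p%:Z %| e)%Z -> False.
Proof.
move=> hg g0 hb hc he p pp pb pc pe.
have : (p%:Z * g %| mgcd M)%Z.
  by rewrite /mgcd !dvdz_gcd hb hc he !(dvdz_mul2r g0) pb pc pe.
rewrite -hg -[X in (_ %| X)%Z]mul1r (dvdz_mul2r g0) dvdz1 /=.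
by move/eqP=> p1; move: pp; rewrite p1.
Qed.

Theorem proposition39 (M M' : 'M[int]_2) :
  \tr M = \tr M' -> \det M = \det M' -> mgcd M = mgcd M' ->
  forall n : nat, (1 < n)%N -> mx_conj (red_mod n M) (red_mod n M').
Proof.
move=> hT hD hg n n1.
rewrite !tr2 in hT; rewrite !det2 in hD.
set g := mgcd M.
have [g0|gn0] := eqVneq g 0.
  have z1 : (M 0 1 == 0) && (M 1 0 == 0) && (M 1 1 - M 0 0 == 0).
    by rewrite -!gcdz_eq0 -g0.
  have z2 : (M' 0 1 == 0) && (M' 1 0 == 0) && (M' 1 1 - M' 0 0 == 0).
    by rewrite -!gcdz_eq0 -/(mgcd M') -hg -g0.
  move: z1 z2 => /andP[/andP[/eqP b0 /eqP c0] /eqP d0] /andP[/andP[/eqP b0' /eqP c0'] /eqP d0'].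
  move/eqP: d0; rewrite subr_eq0 => /eqP d0; move/eqP: d0'; rewrite subr_eq0 => /eqP d0'.
  have ea : M 0 0 = M' 0 0.
    apply: (@mulIf _ 2) => //; rewrite d0 d0' in hT.
    transitivity (M 0 0 + M 0 0); first ring. by rewrite hT; ring.
  have -> : M = M'.
    by rewrite [M]eq2 [M']eq2 b0 c0 d0 b0' c0' d0' ea.
  exists 1%:M; first exact: unitmx1.
  by rewrite invmx1 mul1mx mulmx1.
have gM : forall (m : int), (g %| m)%Z -> exists k, m = k * g by move=> m /dvdzP.
have [b1 hb] := gM _ (dvdz_trans (dvdz_gcdl _ _) (dvdz_gcdl _ _)).
have [c1 hc] := gM _ (dvdz_trans (dvdz_gcdl _ _) (dvdz_gcdr _ _)).
have [e he] := gM _ (dvdz_gcdr _ _).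
have [b1' hb'] : exists k, M' 0 1 = k * g.
  by apply/dvdzP; rewrite /g hg; exact: (dvdz_trans (dvdz_gcdl _ _) (dvdz_gcdl _ _)).
have [c1' hc'] : exists k, M' 1 0 = k * g.
  by apply/dvdzP; rewrite /g hg; exact: (dvdz_trans (dvdz_gcdl _ _) (dvdz_gcdr _ _)).
have [e' he'] : exists k, M' 1 1 - M' 0 0 = k * g.
  by apply/dvdzP; rewrite /g hg; exact: (dvdz_gcdr _ _).
have pr := prim_of (erefl g) gn0 hb hc he.
have pr' := prim_of hg gn0 hb' hc' he'.
set a := M 0 0 in hT hD he pr.
set u := M' 0 0 - a.
have hd : M 1 1 = a + e * g by rewrite -he; ring.
have hd' : M' 1 1 = a + u + e' * g by rewrite -he' /u; ring.
have ha' : M' 0 0 = a + u by rewrite /u; ring.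
rewrite hd hd' ha' hb hc hb' hc' in hT hD.
have h2u : 2 * u - (e - e') * g = 0.
  apply/eqP; rewrite subr_eq0; apply/eqP.
  have : a + (a + e * g) - ((a + u) + (a + u + e' * g)) = 0 by rewrite hT subrr.
  move/eqP; rewrite subr_eq0 => /eqP H.
  suff -> : 2 * u = (a + u + (a + u + e' * g)) - (a + e' * g) - a by rewrite -H; ring.
  ring.
have hDz : a * (a + e * g) - b1 * g * (c1 * g) - ((a + u) * (a + u + e' * g) - b1' * g * (c1' * g)) = 0.
  by rewrite hD subrr.
have key : (e - e') * (e + e') * (g * g) = 4 * (b1' * c1' - b1 * c1) * (g * g).
  apply/eqP; rewrite -subr_eq0; apply/eqP.
  have -> : (e - e') * (e + e') * (g * g) - 4 * (b1' * c1' - b1 * c1) * (g * g) =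
    - 4 * (a * (a + e * g) - b1 * g * (c1 * g) - ((a + u) * (a + u + e' * g) - b1' * g * (c1' * g)))
    - (2 * u - (e - e') * g) * (4 * a + 2 * u + (e - e') * g + 2 * e' * g) by ring.
  by rewrite hDz h2u !mulr0 mul0r subr0.
have gg0 : g * g != 0 by rewrite mulf_neq0.
have key2 := mulIf gg0 key.
have ev : (2%:Z %| e - e')%Z.
  have : (2%:Z %| (e - e') * (e + e'))%Z.
    by rewrite key2; apply: dvdz_mulr.
  rewrite EuclidZ // => /orP[//|H].
  have -> : e - e' = (e + e') - 2 * e' by ring.
  by apply: rpredB => //; apply: dvdz_mulr; exact: dvdzz.
have [t ht] := dvdzP ev.
have hu : u = g * t.
  apply: (@mulIf _ 2) => //; apply/eqP; rewrite -subr_eq0; apply/eqP.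
  rewrite -h2u ht; ring.
have he2 : e = 2 * t + e' by rewrite -[e](subrK e') ht mulrC.
have hbc : b1' * c1' - b1 * c1 = t * (t + e').
  apply: (@mulIf _ 4) => //; rewrite [_ * 4]mulrC -key2 he2; ring.
have eM : M = mk2 (a + g * 0) (g * b1) (g * c1) (a + g * e).
  by rewrite [LHS]eq2 hb hc hd; congr mk2; ring.
have eM' : M' = mk2 (a + g * t) (g * b1') (g * c1') (a + g * (t + e')).
  by rewrite [LHS]eq2 hb' hc' hd' ha' hu; congr mk2; ring.
have n0 : (0 < n)%N by apply: ltn_trans n1.
have [x [y cx]] : exists x y : int, coprime n `|c1 * x * x + (e - 0) * x * y + (- b1) * y * y|.
  apply: form_coprime n0 _ => p pp hA hB hC.
  apply: (pr p pp _ hA); [by move: hC; rewrite rpredN | by rewrite subr0 in hB].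
have [x' [y' cx']] : exists x y : int,
    coprime n `|c1' * x * x + ((t + e') - t) * x * y + (- b1') * y * y|.
  apply: form_coprime n0 _ => p pp hA hB hC.
  have E : t + e' - t = e' by ring.
  apply: (pr' p pp _ hA); [by move: hC; rewrite rpredN | by rewrite E in hB].
have c1m := @cyc n a g 0 b1 c1 e x y n1 cx.
have c2m := @cyc n a g t b1' c1' (t + e') x' y' n1 cx'.
rewrite eM eM'; apply: conj_trans c1m _.
suff -> : mk2 a (- (g * (0 * e - b1 * c1))) g (a + g * (0 + e)) =
          mk2 a (- (g * (t * (t + e') - b1' * c1'))) g (a + g * (t + (t + e'))) by [].
rewrite -hbc he2; congr mk2; ring.
Qed.
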